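(* Let $X=GL_n/B$ be the complete flag variety over a field $k$ of characteristic $0$, $d=n(n-1)/2=\dim X$, and identify $\Omega^*(X)\cong\mathbb{L}[x_1,\ldots,x_n]/S$. Let $c\in\Omega^*(X)$ be a homogeneous element of degree $l$ such that the product of $c$ with any non-constant monomial in $x_1,\ldots,x_n$ is zero. Then $c\in\mathbb{L}^{l-d}[pt]$, i.e. $c=a[pt]$ for some $a\in\mathbb{L}$ of degree $l-d$, where $[pt]$ is the class of a point.
   Context: $\mathbb{L}\cong\mathbb{Z}[a_1,a_2,\ldots]$ is the Lazard ring, graded with $\deg a_i=-i$; $x_i=c_1(L_i)$ where $L_i$ is the line bundle on $X$ with fiber $F^i/F^{i-1}$ at a flag $F$, $\deg x_i=1$; $S$ is the ideal generated by the symmetric polynomials of strictly positive polynomial degree, and the isomorphism sends $x_i$ to $c_1(L_i)$. *)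

(* Defs.v *)
From mathcomp Require Import all_boot all_algebra.
From mathcomp Require Import finmap.
From mathcomp.multinomials Require Import monalg.
From mathcomp.multinomials Require Import mpoly.

Set Implicit Arguments.
Unset Strict Implicit.
Unset Printing Implicit Defensive.

Local Open Scope ring_scope.

(* The Lazard ring  L = Z[a_1, a_2, ...]  (polynomials with integer
   coefficients in countably many variables).  The variable with index
   i : nat (a monomial exponent k has exponent  k i  at i) stands for
   a_(i+1), whose degree is  -(i+1). *)
Definition Laz : comNzRingType := {malg int[cmonom nat]}.

Definition Lmon_deg (k : cmonom nat) : int :=
  - ((\sum_(i <- finsupp k) (i.+1 * k i)%N)%N)%:Z.

Definition Lhomog (l : int) (a : Laz) : Prop :=
  forall k : cmonom nat, k \in monalg.msupp a -> Lmon_deg k = l.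

(* L[x_1, ..., x_n]; the variable x_(i+1) is 'X_i for i : 'I_n. *)
Definition Omega (n : nat) : comNzRingType := mpoly.mpoly n Laz.

Definition homog_of (n : nat) (l : int) (p : Omega n) : Prop :=
  forall m : 'X_{1..n}, m \in mpoly.msupp p ->
  forall k : cmonom nat, k \in monalg.msupp (mpoly.mcoeff m p) ->
    (mpoly.mdeg m)%:Z + Lmon_deg k = l.

Definition xhomog (n : nat) (e : nat) (p : Omega n) : Prop :=
  forall m : 'X_{1..n}, m \in mpoly.msupp p -> mpoly.mdeg m = e.

Definition Sgen (n : nat) (s : Omega n) : Prop :=
  s \is symmetric /\ exists e : nat, (0 < e)%N /\ xhomog e s.

Definition inS (n : nat) (p : Omega n) : Prop :=
  exists rs : seq (Omega n * Omega n),
    (forall q, q \in rs -> Sgen q.2) /\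
    p = \sum_(q <- rs) q.1 * q.2.

Definition xmon (n : nat) (m : 'X_{1..n}) : Omega n := 'X_[m].

(* The class of a point: x_1^(n-1) x_2^(n-2) ... x_(n-1)^1 x_n^0
   (the point class is +- this monomial; the sign is
   irrelevant for the statement). *)
Definition pt_class (n : nat) : Omega n :=
  xmon [multinom (n - i.+1)%N | i < n].

Definition flag_dim (n : nat) : nat := (n * (n - 1))./2.

(* Main.v *)
Require Import Defs.
From mathcomp Require Import all_boot all_algebra all_fingroup.
From mathcomp Require Import finmap zify ring.
From mathcomp.multinomials Require Import monalg.
From mathcomp.multinomials Require Import mpoly.
Set Implicit Arguments.
Unset Strict Implicit.
Unset Printing Implicit Defensive.
Import GRing.Theory.
Local Open Scope ring_scope.

Section Ideal.
Variable n : nat.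
Local Notation MP := (mpoly.mpoly n Laz).

Lemma inS0 : inS (0 : Omega n).
Proof. by exists [::]; split => //; rewrite big_nil. Qed.

Lemma inSD (p q : MP) : inS p -> inS q -> inS (p + q).
Proof.
move=> [r1 [H1 E1]] [r2 [H2 E2]]; exists (r1 ++ r2); split.
  by move=> x; rewrite mem_cat => /orP [] ?; [apply: H1|apply: H2].
by rewrite big_cat /= E1 E2.
Qed.

Lemma inSMl (r p : MP) : inS p -> inS (r * p).
Proof.
move=> [rs [H E]]; exists [seq (r * q.1, q.2) | q <- rs]; split.
  by move=> x /mapP [y Hy ->] /=; apply: H.
rewrite big_map E mulr_sumr; apply: eq_bigr => q _ /=; by rewrite mulrA.
Qed.

Lemma inSN (p : MP) : inS p -> inS (- p).
Proof. by move=> H; rewrite -mulN1r; apply: inSMl. Qed.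

Lemma inSB (p q : MP) : inS p -> inS q -> inS (p - q).
Proof. by move=> ? ?; apply: inSD => //; apply: inSN. Qed.

Lemma inSMr (r p : MP) : inS p -> inS (p * r).
Proof. by rewrite mulrC; apply: inSMl. Qed.

Lemma inS_sum (I : Type) (s : seq I) (F : I -> MP) :
  (forall i, inS (F i)) -> inS (\sum_(i <- s) F i).
Proof.
move=> H; elim: s => [|x s IH]; first by rewrite big_nil; apply: inS0.
by rewrite big_cons; apply: inSD.
Qed.

Lemma inS_gen (s : MP) : Sgen s -> inS s.
Proof.
move=> H; exists [:: (1, s)]; split; first by move=> q; rewrite inE => /eqP -> .
by rewrite big_seq1 mul1r.
Qed.

End Ideal.

Lemma Laz_2 (x : Laz) : x + x = 0 -> x = 0.
Proof.
move=> H; apply/malgP => k; rewrite monalg.mcoeff0.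
have := congr1 (monalg.mcoeff k) H; rewrite monalg.mcoeffD monalg.mcoeff0.
by move: (monalg.mcoeff k x) => z; lia.
Qed.

Section Integ.
Variable n : nat.
Local Notation MP := (mpoly.mpoly n Laz).

Definition delta : 'X_{1..n} := [multinom (n - i.+1)%N | i < n].
Definition Aop (p : MP) : MP := \sum_(s : 'S_n) (-1) ^+ s *: msym s p.
Definition integ (p : MP) : Laz := (Aop p)@_delta.

Lemma AopD p q : Aop (p + q) = Aop p + Aop q.
Proof. by rewrite /Aop -big_split; apply: eq_bigr => s _; rewrite msymD scalerDr. Qed.

Lemma AopZ c p : Aop (c *: p) = c *: Aop p.
Proof.
rewrite /Aop scaler_sumr; apply: eq_bigr => s _.
by rewrite msymZ !scalerA mulrC.
Qed.

Lemma integD p q : integ (p + q) = integ p + integ q.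
Proof. by rewrite /integ AopD mcoeffD. Qed.

Lemma integZ c p : integ (c *: p) = c * integ p.
Proof. by rewrite /integ AopZ mcoeffZ. Qed.

Lemma integ0 : integ 0 = 0.
Proof. by rewrite -(scale0r 0) integZ mul0r. Qed.

Lemma integ_sum (I : Type) (s : seq I) (F : I -> MP) :
  integ (\sum_(i <- s) F i) = \sum_(i <- s) integ (F i).
Proof.
elim: s => [|x s IH]; first by rewrite !big_nil integ0.
by rewrite !big_cons integD IH.
Qed.

Lemma Aop_symM q s : s \is symmetric -> Aop (q * s) = Aop q * s.
Proof.
move/issymP => Hs; rewrite /Aop mulr_suml; apply: eq_bigr => σ _.
by rewrite msymM Hs mpoly_scaleAl.
Qed.

Lemma Aop_anti q (i j : 'I_n) : i != j ->
  msym (tperm i j) (Aop q) = - Aop q.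
Proof.
move=> nij; rewrite /Aop raddf_sum /=.
rewrite [in RHS](reindex_inj (mulIg (tperm i j))) /= -sumrN.
apply: eq_bigr => σ _; rewrite msymZ -msymMm odd_permM odd_tperm nij.
by rewrite signr_addb expr1 mulrN1 scaleNr opprK.
Qed.

Lemma Aop_rep q (ν : 'X_{1..n}) (i j : 'I_n) : i != j -> ν i = ν j ->
  (Aop q)@_ν = 0.
Proof.
move=> nij eν.
have Eν : [multinom ν (tperm i j k) | k < n] = ν.
  apply/mnmP => k; rewrite mnmE.
  by case: (tpermP i j k) => [->|->|].
have H1 : (msym (tperm i j) (Aop q))@_ν = (Aop q)@_ν.
  by rewrite mcoeff_sym Eν.
rewrite Aop_anti // mcoeffN in H1.
apply: Laz_2; rewrite -{1}H1; exact: addNr.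
Qed.

Lemma deltaE i : delta i = (n - i.+1)%N.
Proof. by rewrite /delta mnmE. Qed.

Lemma delta_inj (i j : 'I_n) : delta i = delta j -> i = j.
Proof.
rewrite !deltaE => H; apply/val_inj => /=.
have := ltn_ord i; have := ltn_ord j; lia.
Qed.

Lemma delta_inj_le (ν : 'X_{1..n}) :
  (forall i, ν i <= delta i)%N -> (forall i j, ν i = ν j -> i = j) -> ν = delta.
Proof.
move=> le inj.
have ltn i : (ν i < n)%N.
  have := le i; rewrite deltaE; have := ltn_ord i; lia.
pose f i := Ordinal (ltn i).
have finj : injective f by move=> i j /(congr1 val) /= /inj.
have E1 : (\sum_(i < n) ν i = \sum_(i < n) (i : nat))%N.
  by rewrite [in RHS](reindex_inj finj).
have E2 : (\sum_(i < n) delta i = \sum_(i < n) (i : nat))%N.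
  rewrite (reindex_inj rev_ord_inj); apply: eq_bigr => i _.
  rewrite deltaE /=; have := ltn_ord i; lia.
have L : forall i : 'I_n, true -> (ν i <= delta i ?= iff (ν i == delta i))%N.
  by move=> i _; apply: leqif_eq.
have := (leqif_sum L).2; rewrite E1 E2 eqxx => /esym /forallP H.
by apply/mnmP => i; apply/eqP; have := H i.
Qed.

Lemma integX g : integ 'X_[g] =
  \sum_(s : 'S_n) (-1) ^+ s * ([multinom g ((s^-1)%g i) | i < n] == delta)%:R.
Proof.
rewrite /integ /Aop raddf_sum /=; apply: eq_bigr => s _.
by rewrite mcoeffZ msymX mcoeffX.
Qed.

Lemma integX_delta : integ 'X_[delta] = 1.
Proof.
rewrite integX (bigD1 1%g) //= big1 ?addr0.
  rewrite odd_perm1 expr0 mul1r invg1.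
  have -> : [multinom delta ((1 : 'S_n)%g i) | i < n] = delta.
    by apply/mnmP => i; rewrite mnmE perm1.
  by rewrite eqxx.
move=> s ns1; case: eqP => [H|]; last by rewrite mulr0.
exfalso; move/negP: ns1; apply; apply/eqP/permP => i.
have := congr1 (fun m : 'X_{1..n} => m (s i)) H; rewrite mnmE permK.
by move=> /delta_inj E; rewrite perm1 -E.
Qed.

Lemma integX_ne0 g : integ 'X_[g] != 0 ->
  exists s : 'S_n, forall k, g (s k) = delta k.
Proof.
rewrite integX => H.
case: (boolP [exists s : 'S_n, [multinom g ((s^-1)%g i) | i < n] == delta]).
  move=> /existsP [s /eqP Hs]; exists (s^-1)%g => k.
  by have := congr1 (fun m : 'X_{1..n} => m k) Hs; rewrite mnmE.
move=> /existsPn N; exfalso; move/negP: H; apply; apply/eqP.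
by apply: big1 => s _; rewrite (negbTE (N s)) mulr0.
Qed.

Lemma integ_symM q s : s \is symmetric -> s@_0%MM = 0 -> integ (q * s) = 0.
Proof.
move=> Hs s0; rewrite /integ Aop_symM // mcoeffM.
apply: big1 => k /eqP Ek.
case: (boolP ((k.2 : 'X_{1..n}) == 0%MM)) => [/eqP ->|nz]; first by rewrite s0 mulr0.
set ν : 'X_{1..n} := k.1.
have le : forall i, (ν i <= delta i)%N.
  by move=> i; rewrite Ek mnmDE leq_addr.
case: (boolP [exists i : 'I_n, exists j : 'I_n, (i != j) && (ν i == ν j)]).
  move=> /existsP [i /existsP [j /andP [nij /eqP eij]]].
  by rewrite (Aop_rep q nij eij) mul0r.
move=> /existsPn N; exfalso; move/negP: nz; apply.
have inj : forall i j, ν i = ν j -> i = j.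
  move=> i j eij; apply/eqP; move: (N i) => /existsPn /(_ j).
  by rewrite eij eqxx andbT negbK.
have Eν := delta_inj_le le inj.
apply/eqP/mnmP => i; rewrite mnm0E.
have := congr1 (fun m : 'X_{1..n} => m i) Ek; rewrite mnmDE -/ν Eν /=; lia.
Qed.

Lemma integ_inS p : inS p -> integ p = 0.
Proof.
move=> [rs [H ->]]; rewrite integ_sum big_seq big1 // => q /H [Hs [e [e0 He]]].
apply: integ_symM => //; apply/eqP; rewrite mcoeff_eq0; apply/negP => /He.
by rewrite mdeg0 => E; rewrite -E in e0.
Qed.

End Integ.

Section Supp.
Variable n : nat.
Local Notation MP := (mpoly.mpoly n Laz).

Definition supp_in (A : 'X_{1..n} -> Prop) (p : MP) :=
  forall m, m \in msupp p -> A m.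

Lemma supp_in0 A : supp_in A 0.
Proof. by move=> m; rewrite msupp0. Qed.

Lemma supp_inD A p q : supp_in A p -> supp_in A q -> supp_in A (p + q).
Proof.
by move=> Hp Hq m /msuppD_le; rewrite mem_cat => /orP [] ?; [apply: Hp|apply: Hq].
Qed.

Lemma supp_inN A p : supp_in A p -> supp_in A (- p).
Proof. by move=> Hp m; rewrite (perm_mem (msuppN p)); apply: Hp. Qed.

Lemma supp_inZ A c p : supp_in A p -> supp_in A (c *: p).
Proof. by move=> Hp m /msuppZ_le; apply: Hp. Qed.

Lemma supp_in_sum A (I : Type) (s : seq I) (F : I -> MP) :
  (forall i, supp_in A (F i)) -> supp_in A (\sum_(i <- s) F i).
Proof.
move=> H; elim: s => [|x s IH]; first by rewrite big_nil; apply: supp_in0.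
by rewrite big_cons; apply: supp_inD.
Qed.

Lemma supp_inX (A : 'X_{1..n} -> Prop) m : A m -> supp_in A 'X_[m].
Proof. by move=> H m'; rewrite msuppX inE => /eqP ->. Qed.

Lemma supp_in1 (A : 'X_{1..n} -> Prop) : A 0%MM -> supp_in A 1.
Proof. by move=> H m'; rewrite msupp1 inE => /eqP ->. Qed.

Lemma supp_inM (A B C : 'X_{1..n} -> Prop) p q :
  (forall a b, A a -> B b -> C (a + b)%MM) ->
  supp_in A p -> supp_in B q -> supp_in C (p * q).
Proof.
move=> H Hp Hq m /msuppM_le /allpairsP [[a b] /= [ha hb ->]].
by apply: H; [apply: Hp|apply: Hq].
Qed.

Lemma supp_in_impl (A B : 'X_{1..n} -> Prop) p :
  (forall m, A m -> B m) -> supp_in A p -> supp_in B p.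
Proof. by move=> H Hp m /Hp; apply: H. Qed.

End Supp.

Section Poly.
Variable n : nat.
Local Notation MP := (mpoly.mpoly n Laz).
Local Notation PP := {poly MP}.

Definition xv (i : nat) : MP := if insub i is Some k then 'X_k else 0.

Lemma xvE (k : 'I_n) : xv k = 'X_k.
Proof.
rewrite /xv; case: insubP => [k' _ /val_inj -> //|]; by rewrite ltn_ord.
Qed.

Definition u i : PP := (xv i)%:P * 'X.
Definition lf i : PP := 1 - u i.
Definition gf i : PP := \sum_(b < n.+1) u i ^+ b.
Definition Pf : PP := \prod_(0 <= i < n) lf i.
Definition Hp j : PP := \prod_(0 <= i < j) gf i.

Definition Vs j (m : 'X_{1..n}) := forall i : 'I_n, (j <= i)%N -> m i = 0.
Definition GrV j (f : PP) :=
  forall k, supp_in (fun m => mdeg m = k /\ Vs j m) f`_k.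

Lemma GrV_mono j j' f : (j <= j')%N -> GrV j f -> GrV j' f.
Proof.
move=> le H k; apply: supp_in_impl (H k) => m [-> V]; split=> // i ji.
by apply: V; apply: leq_trans ji.
Qed.

Lemma GrV1 j : GrV j 1.
Proof.
move=> k; rewrite coef1; case: eqP => [->|_]; last exact: supp_in0.
by apply: supp_in1; split; [rewrite mdeg0|move=> i _; rewrite mnm0E].
Qed.

Lemma GrVD j f h : GrV j f -> GrV j h -> GrV j (f + h).
Proof. by move=> Hf Hh k; rewrite coefD; apply: supp_inD. Qed.

Lemma GrVN j f : GrV j f -> GrV j (- f).
Proof. by move=> Hf k; rewrite coefN; apply: supp_inN. Qed.

Lemma GrVM j f h : GrV j f -> GrV j h -> GrV j (f * h).
Proof.
move=> Hf Hh k; rewrite coefM; apply: supp_in_sum => a.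
apply: (supp_inM _ (Hf a) (Hh (k - a)%N)) => x y [dx vx] [dy vy]; split.
  by rewrite mdegD dx dy subnKC // -ltnS.
by move=> i ji; rewrite mnmDE vx // vy.
Qed.

Lemma GrV_sum j (I : Type) (s : seq I) (F : I -> PP) :
  (forall i, GrV j (F i)) -> GrV j (\sum_(i <- s) F i).
Proof. by move=> H k; rewrite coef_sum; apply: supp_in_sum => i; apply: H. Qed.

Lemma GrV_prod j (s : seq nat) (F : nat -> PP) :
  (forall i, i \in s -> GrV j (F i)) -> GrV j (\prod_(i <- s) F i).
Proof.
move=> H; rewrite big_seq; apply: big_ind => //; first exact: GrV1.
exact: GrVM.
Qed.

Lemma xv_deg i : supp_in (fun m => mdeg m = 1%N /\ Vs i.+1 m) (xv i).
Proof.
rewrite /xv; case: insubP => [k _ ki|_]; last exact: supp_in0.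
apply: supp_inX; split; first exact: mdeg1.
move=> i' le; rewrite mnm1E; apply/eqP; rewrite eqb0; apply/eqP => E.
by move: le; rewrite -E ki ltnn.
Qed.

Lemma xv_exp_deg i b :
  supp_in (fun m => mdeg m = b /\ Vs i.+1 m) (xv i ^+ b).
Proof.
elim: b => [|b IH]; first by rewrite expr0; apply: supp_in1; split;
  [rewrite mdeg0|move=> k _; rewrite mnm0E].
rewrite exprS; apply: (@supp_inM _ _ _ (fun m => mdeg m = b.+1 /\ Vs i.+1 m) _ _ _ (@xv_deg i) IH) => x y [dx vx] [dy vy].
by split; [rewrite mdegD dx dy|move=> k le; rewrite mnmDE vx // vy].
Qed.

Lemma coef_uX i b k : (u i ^+ b)`_k = if k == b then xv i ^+ b else 0.
Proof.
rewrite /u exprMn -rmorphXn /= coefCM coefXn.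
by case: eqP => _; rewrite ?mulr1 ?mulr0.
Qed.

Lemma GrV_uX i b : GrV i.+1 (u i ^+ b).
Proof.
move=> k; rewrite coef_uX; case: eqP => [->|_]; last exact: supp_in0.
exact: xv_exp_deg.
Qed.

Lemma GrV_gf i : GrV i.+1 (gf i).
Proof. by apply: GrV_sum => b; apply: GrV_uX. Qed.

Lemma GrV_lf i : GrV i.+1 (lf i).
Proof. by apply: GrVD; [apply: GrV1|apply: GrVN; rewrite -[u i]expr1; apply: GrV_uX]. Qed.

Lemma GrV_Hp j : GrV j (Hp j).
Proof.
apply: GrV_prod => i; rewrite mem_index_iota => /andP [_ ij].
by apply: GrV_mono ij (@GrV_gf i).
Qed.

Lemma GrV_Pf : GrV n Pf.
Proof.
apply: GrV_prod => i; rewrite mem_index_iota => /andP [_ ij].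
by apply: GrV_mono ij (@GrV_lf i).
Qed.

End Poly.

Section Poly2.
Variable n : nat.
Local Notation MP := (mpoly.mpoly n Laz).
Local Notation PP := {poly MP}.
Local Notation u := (@u n).
Local Notation lf := (@lf n).
Local Notation gf := (@gf n).
Local Notation Pf := (@Pf n).
Local Notation Hp := (@Hp n).
Local Notation xv := (@xv n).

Lemma u_coef0 i : (u i)`_0 = 0.
Proof. by rewrite /u coefCM coefX mulr0. Qed.

Lemma lf_coef0 i : (lf i)`_0 = 1.
Proof. by rewrite /lf coefB u_coef0 coef1 subr0. Qed.

Lemma gf_coef0 i : (gf i)`_0 = 1.
Proof.
rewrite /gf coef_sum big_ord_recl /= coef_uX /= expr0 big1 ?addr0 //.
by move=> b _; rewrite coef_uX.
Qed.

Lemma Pf_coef0 : Pf`_0 = 1.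
Proof. by rewrite /Pf coef0_prod big1 // => i _; rewrite lf_coef0. Qed.

Lemma Hp_coef0 j : (Hp j)`_0 = 1.
Proof. by rewrite /Hp coef0_prod big1 // => i _; rewrite gf_coef0. Qed.

Lemma PfE : Pf = \prod_(k < n) (1 - ('X_k)%:P * 'X).
Proof. by rewrite /Pf big_mkord; apply: eq_bigr => k _; rewrite /lf /u xvE. Qed.

Lemma msymXU (s : 'S_n) (k : 'I_n) : msym s ('X_k : MP) = 'X_(s k).
Proof.
rewrite msymX; congr mpolyX; apply/mnmP => i; rewrite !mnmE; congr (nat_of_bool _).
case: (boolP (s k == i)) => [/eqP <-|ne]; first by rewrite permK eqxx.
apply: negbTE; apply: contra ne => /eqP ->.
by rewrite permKV.
Qed.

Lemma Pf_sym k : Pf`_k \is symmetric.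
Proof.
apply/issymP => s.
have E : map_poly (msym s) Pf = Pf.
  rewrite PfE rmorph_prod /= [RHS](reindex_inj (@perm_inj _ s)).
  apply: eq_bigr => i _.
  by rewrite rmorphB rmorph1 rmorphM /= map_polyC map_polyX /= msymXU.
by rewrite -(coef_map (msym s)) E.
Qed.

Lemma Pf_Sgen k : (0 < k)%N -> Sgen (Pf`_k).
Proof.
move=> k0; split; first exact: Pf_sym.
exists k; split=> // m /(@GrV_Pf n k) [].
done.
Qed.

Lemma gf_lf i : gf i * lf i = 1 + (- ((xv i)%:P ^+ n.+1)) * 'X^(n.+1).
Proof.
rewrite /gf /lf mulrC -opprB mulNr -subrX1 opprB /u exprMn mulNr.
done.
Qed.

Lemma prod_1X (N : nat) (r : seq nat) (F : nat -> PP) :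
  (forall i, exists w, F i = 1 + w * 'X^N) ->
  exists w, \prod_(i <- r) F i = 1 + w * 'X^N.
Proof.
move=> H; elim: r => [|x r [w IH]]; first by exists 0; rewrite big_nil mul0r addr0.
have [w' E] := H x; rewrite big_cons E IH.
exists (w' + w + w' * w * 'X^N).
ring.
Qed.

Lemma size_lf i : (size (lf i) <= 2)%N.
Proof.
rewrite /lf; apply: leq_trans (size_polyD _ _) _.
rewrite size_polyN geq_max; apply/andP; split.
  by rewrite size_poly1.
apply: leq_trans (size_mul_leq _ _) _; rewrite size_polyX.
by have := size_polyC_leq1 (xv i); case: (size _) => [|[]].
Qed.

Lemma size_prod_lf a b : (a <= b)%N ->
  (size (\prod_(a <= i < b) lf i)%R <= (b - a).+1)%N.
Proof.
elim: b => [|b IH] ab.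
  by rewrite big_geq // size_poly1.
case: (ltngtP a b.+1) ab => // [ab _|-> _]; last by rewrite big_geq ?size_poly1.
rewrite big_nat_recr //=; apply: leq_trans (size_mul_leq _ _) _.
have := IH ab; have := size_lf b.
move: (size (lf b)) (size (\prod_(a <= i < b) lf i)) => x y; lia.
Qed.

Lemma HpPf_coef j m : (j <= n)%N -> (n - j < m)%N -> (m <= n)%N ->
  (Hp j * Pf)`_m = 0.
Proof.
move=> jn lt le.
rewrite /Pf (@big_cat_nat _ _ _ j) //= mulrA /Hp -big_split /=.
have [w Ew] := @prod_1X n.+1 (index_iota 0 j) (fun i => gf i * lf i)
  (fun i => ex_intro _ _ (gf_lf i)).
rewrite Ew mulrDl mul1r -mulrA [X in w * X]mulrC mulrA coefD coefMXn ltnS le addr0.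
apply: nth_default; apply: leq_trans (size_prod_lf jn) _; lia.
Qed.

Lemma Hp_inS j m : (j <= n)%N -> (n - j < m)%N -> (m <= n)%N ->
  inS ((Hp j)`_m).
Proof.
move=> jn lt le; have := HpPf_coef jn lt le.
rewrite coefM big_ord_recr /= subnn Pf_coef0 mulr1 => /eqP.
rewrite addrC addr_eq0 => /eqP ->; apply: inSN; apply: inS_sum => a.
apply: inSMl; apply: inS_gen; apply: Pf_Sgen.
by rewrite subn_gt0.
Qed.

End Poly2.

Lemma digit_bound (B N : nat) (f : nat -> nat) :
  (forall i, i < N -> f i < B)%N -> (\sum_(0 <= i < N) f i * B ^ i < B ^ N)%N.
Proof.
elim: N => [|N IH] H; first by rewrite big_geq.
rewrite big_nat_recr //= expnSr.
have := IH (fun i iN => H i (ltnW iN)); have := H N (ltnSn N).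
move: (\sum_(0 <= i < N) f i * B ^ i)%N (B ^ N)%N (f N) => S X fN; nia.
Qed.

Lemma digit_lt (B N : nat) (f g : nat -> nat) (j : nat) :
  (forall i, i < N -> f i < B)%N -> (j < N)%N -> (f j < g j)%N ->
  (forall i, j < i -> i < N -> f i = g i)%N ->
  (\sum_(0 <= i < N) f i * B ^ i < \sum_(0 <= i < N) g i * B ^ i)%N.
Proof.
elim: N => [|N IH] Hf jN fg feq; first by [].
rewrite !big_nat_recr //=.
case: (ltnP j N) => [jN'|Nj].
  rewrite (feq N) // ltn_add2r; apply: IH => //.
    by move=> i iN; exact: (Hf i (ltnW iN)).
  by move=> i ji iN; exact: (feq i ji (ltnW iN)).
have jE : j = N by apply/eqP; rewrite eqn_leq Nj -ltnS jN.
subst j.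
have := digit_bound (fun i iN => Hf i (ltnW iN)).
move: (\sum_(0 <= i < N) f i * B ^ i)%N (\sum_(0 <= i < N) g i * B ^ i)%N
  (B ^ N)%N => S T X; move: fg; move: (f N) (g N) => a b; nia.
Qed.

Section Red.
Variable n : nat.
Local Notation MP := (mpoly.mpoly n Laz).

Definition shape (j : 'I_n) (μ : 'X_{1..n}) :=
  mdeg μ = (n - j)%N /\ (μ j < n - j)%N /\ forall i : 'I_n, (j < i)%N -> μ i = 0.

Lemma gf_coef i b : (b <= n)%N -> (@gf n i)`_b = xv n i ^+ b.
Proof.
move=> bn; rewrite /gf coef_sum (bigD1 (Ordinal (bn : b < n.+1)%N)) //=.
rewrite coef_uX eqxx big1 ?addr0 // => k nk; rewrite coef_uX.
case: eqP => // E; exfalso; move/negP: nk; apply; apply/eqP/val_inj => /=.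
by rewrite E.
Qed.

Lemma Gj (j : 'I_n) : exists R : MP,
  inS ('X_[U_(j) *+ (n - j)] + R) /\ supp_in (shape j) R.
Proof.
have jn := ltn_ord j.
have h1 : (n - j.+1 < n - j)%N by lia.
have h2 : (n - j <= n)%N by lia.
set m := (n - j)%N.
have HG := @Hp_inS n j.+1 m jn h1 h2.
move: HG; rewrite /Hp big_nat_recr //= -/(Hp n j) coefMr big_ord_recr /=.
rewrite subnn Hp_coef0 mul1r gf_coef ?leq_subr // xvE mpolyXn addrC.
set R := (\sum_(_ < _) _) => HG.
exists R; split => //.
apply: supp_in_sum => b.
rewrite gf_coef; last by have := ltn_ord b; rewrite /m; lia.
rewrite xvE mpolyXn.
apply: (@supp_inM n _ _ (shape j) _ _ _ (@GrV_Hp n j (m - b)%N) (supp_inX (A := fun x => x = U_(j) *+ b)%MM _ erefl)).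
move=> a c [da va] ->; have bm := ltn_ord b.
split; first by rewrite mdegD da mdegMn mdeg1 mul1n subnK //; apply: ltnW.
split; first by rewrite mnmDE va // mulmnE mnm1E eqxx mul1n.
move=> i ji; rewrite mnmDE va ?(ltnW ji) // mulmnE mnm1E.
by rewrite (_ : (j == i) = false) ?mul0n //; apply/negbTE; rewrite neq_ltn ji.
Qed.

End Red.

Lemma rearr (V : zmodType) (a S r b : V) : a + S - (r + b) = (S - r) + (a - b).
Proof. by rewrite opprD [a + S]addrC addrACA. Qed.
Lemma rearr3 (V : zmodType) (a S r b : V) : a + S - (b + r) = (S - r) + (a - b).
Proof. by rewrite (addrC b) rearr. Qed.
Lemma rearr2 (R : comRingType) (x xm Rr rs : R) :
  x * xm - - rs = x * (xm + Rr) - (x * Rr - rs).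
Proof. by rewrite opprK mulrDr opprB addrCA addrK addrC. Qed.

Section Red2.
Variable n : nat.
Local Notation MP := (mpoly.mpoly n Laz).

Definition std (μ : 'X_{1..n}) := forall i : 'I_n, (μ i <= n - i.+1)%N.
Definition rk (D : nat) (γ : 'X_{1..n}) := (\sum_(0 <= i < n) nth 0%N γ i * D.+1 ^ i)%N.

Lemma comp_le_mdeg (γ : 'X_{1..n}) (i : 'I_n) : (γ i <= mdeg γ)%N.
Proof. by rewrite mdegE (bigD1 i) //= leq_addr. Qed.

Lemma rk_lt D (γ γ2 : 'X_{1..n}) (j : 'I_n) : mdeg γ2 = D ->
  (γ2 j < γ j)%N -> (forall i : 'I_n, (j < i)%N -> γ2 i = γ i) ->
  (rk D γ2 < rk D γ)%N.
Proof.
move=> dD lt eq; apply: (@digit_lt _ _ _ _ j).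
- move=> i iN; rewrite (_ : i = Ordinal iN) // -mnm_nth ltnS -dD.
  exact: comp_le_mdeg.
- exact: ltn_ord.
- by rewrite -!mnm_nth.
- move=> i ji iN; rewrite (_ : i = Ordinal iN) // -!mnm_nth; exact: eq.
Qed.

Lemma inSZ c (p : MP) : inS p -> inS (c *: p).
Proof. by rewrite -mul_mpolyC; apply: inSMl. Qed.

Lemma reduce N (γ : 'X_{1..n}) : (rk (mdeg γ) γ < N)%N ->
  exists r : MP, inS ('X_[γ] - r) /\ supp_in std r.
Proof.
elim: N γ => [|N IH] γ; first by [].
move=> Hrk.
case: (boolP [forall i : 'I_n, γ i <= n - i.+1]%N) => [/forallP Hs|].
  exists 'X_[γ]; split; first by rewrite subrr; apply: inS0.
  by apply: supp_inX => i; apply: Hs.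
move=> /forallPn [j Hj].
have jn := ltn_ord j.
have mj : (n - j <= γ j)%N by move: Hj; rewrite -ltnNge; lia.
have [R [HR SR]] := Gj j.
set m := (n - j)%N in mj HR SR.
have [γ' Eγ] : exists γ', γ = (γ' + U_(j) *+ m)%MM.
  exists (γ - U_(j) *+ m)%MM.
  rewrite submK //; apply/mnm_lepP => i; rewrite mulmnE mnm1E.
  by case: eqP => [<-|_]; rewrite ?mul1n ?mul0n.
have dγ : mdeg γ = (mdeg γ' + m)%N by rewrite {1}Eγ mdegD mdegMn mdeg1 mul1n.
have Hlist : forall s : seq 'X_{1..n}, {subset s <= msupp R} ->
    exists r : MP, inS (\sum_(μ <- s) R@_μ *: 'X_[γ' + μ] - r) /\ supp_in std r.
  elim => [|μ s IHs] sub.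
    by exists 0; rewrite big_nil subrr; split; [apply: inS0|apply: supp_in0].
  have [rs [Hrs Srs]] := IHs (fun x xs => sub x (ltac:(by rewrite inE xs orbT))).

  have [dμ [μj μi]] := SR μ (sub μ (mem_head _ _)).
  have dμ' : mdeg (γ' + μ)%MM = mdeg γ by rewrite mdegD dμ dγ.
  have lt : (rk (mdeg γ) (γ' + μ) < N)%N.
    rewrite -ltnS; apply: leq_trans Hrk; rewrite ltnS.
    apply: (rk_lt dμ' (j := j)).
      rewrite mnmDE Eγ mnmDE ltn_add2l mulmnE mnm1E eqxx mul1n //.
    move=> i ji; rewrite mnmDE μi // Eγ mnmDE mulmnE mnm1E.
    by rewrite (_ : (j == i) = false) ?mul0n //; apply/negbTE; rewrite neq_ltn ji.
  have [rμ [Hrμ Srμ]] := IH (γ' + μ)%MM ltac:(by rewrite dμ').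
  exists (rs + R@_μ *: rμ); split; last by apply: supp_inD => //; apply: supp_inZ.
  rewrite big_cons.
  rewrite (@rearr MP) -(scalerBr (R@_μ)).
  by apply: inSD => //; apply: inSZ.
have [rs [Hrs Srs]] := Hlist (msupp R) (fun x h => h).
exists (- rs); split; last by apply: supp_inN.
have E2 : 'X_[γ'] * R = \sum_(μ <- msupp R) R@_μ *: 'X_[γ' + μ].
  rewrite {1}(mpolyE R) mulr_sumr; apply: eq_bigr => μ _.
  by rewrite -scalerAr mpolyXD.
have -> : 'X_[γ] - - rs = 'X_[γ'] * ('X_[U_(j) *+ m] + R) - ('X_[γ'] * R - rs).
  by rewrite {1}Eγ mpolyXD opprK mulrDr opprB addrCA addrK addrC.
apply: inSB; first exact: (inSMl _ HR).
rewrite E2; exact: Hrs.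
Qed.

Lemma reduce_poly (c : MP) : exists r : MP, inS (c - r) /\ supp_in std r.
Proof.
rewrite {1}(mpolyE c); elim: (msupp c) => [|γ s [r [Hr Sr]]].
  by exists 0; rewrite big_nil subrr; split; [apply: inS0|apply: supp_in0].
have [rγ [Hrγ Srγ]] := reduce (ltnSn (rk (mdeg γ) γ)).
exists (c@_γ *: rγ + r); split; last by apply: supp_inD => //; apply: supp_inZ.
rewrite big_cons.
rewrite (@rearr3 MP) -(scalerBr (c@_γ)).
apply: inSD; [exact: Hr | exact: inSZ].
Qed.

End Red2.

Section Socle.
Variable n : nat.
Local Notation MP := (mpoly.mpoly n Laz).
Local Notation delta := (@delta n).
Local Notation std := (@std n).

Lemma std_le (α : 'X_{1..n}) : std α -> forall i, (α i <= delta i)%N.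
Proof. by move=> H i; rewrite deltaE; apply: H. Qed.

Lemma lex_lemma (α α' : 'X_{1..n}) : std α -> std α' -> α' != α ->
  (exists s : 'S_n, forall k, (α' + (delta - α))%MM (s k) = delta k) ->
  exists j : 'I_n, (α' j < α j)%N /\ forall i : 'I_n, (i < j)%N -> α' i = α i.
Proof.
move=> sα sα' neq [s Hs].
have [i0 Hi0] : exists i0 : 'I_n, α' i0 != α i0.
  case: (boolP [exists i, α' i != α i]) => [/existsP //|/existsPn N].
  exfalso; move/negP: neq; apply; apply/eqP/mnmP => i.
  by have := N i; rewrite negbK => /eqP.
case: (arg_minnP (P := fun i : 'I_n => α' i != α i) (fun i => nat_of_ord i) Hi0).
move=> j Pj minj; exists j.
have low : forall i : 'I_n, (i < j)%N -> α' i = α i.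
  move=> i ij; apply/eqP; apply: contraTT ij => Pi.
  by rewrite -leqNgt; apply: minj.
split=> //.
rewrite ltn_neqAle Pj /=; rewrite leqNgt; apply/negP => lt.
set γ := (α' + (delta - α))%MM in Hs.
have γE : forall i, γ i = (α' i + (delta i - α i))%N by move=> i; rewrite mnmDE mnmBE.
have γinj : forall x y, γ x = γ y -> x = y.
  move=> x y; rewrite -(permKV s x) -(permKV s y) !Hs => /delta_inj ->.
  done.
set k := (s^-1)%g j.
have γj : γ j = delta k by rewrite -Hs /k permKV.
have gt : (delta j < γ j)%N.
  rewrite γE; have := std_le sα j; lia.
have kj : (k < j)%N.
  move: gt; rewrite γj !deltaE; have := ltn_ord k; have := ltn_ord j; lia.
have γk : γ k = delta k.
  rewrite γE low // deltaE; have := std_le sα k; rewrite deltaE; lia.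
have := γinj _ _ (etrans γk (esym γj)) => E.
by move: kj; rewrite E ltnn.
Qed.

Definition Mr (α : 'X_{1..n}) := (\sum_(0 <= i < n) nth 0%N α (n.-1 - i) * n.+1 ^ i)%N.

Lemma Mr_lt (α α' : 'X_{1..n}) (j : 'I_n) : std α' ->
  (α' j < α j)%N -> (forall i : 'I_n, (i < j)%N -> α' i = α i) -> (Mr α' < Mr α)%N.
Proof.
move=> sα' lt eq; have jn := ltn_ord j.
apply: (@digit_lt _ _ _ _ (n.-1 - j)).
- move=> i iN; have h : (n.-1 - i < n)%N by lia.
  rewrite (_ : (n.-1 - i)%N = Ordinal h) // -mnm_nth.
  have := sα' (Ordinal h); lia.
- lia.
- have -> : (n.-1 - (n.-1 - j))%N = j by lia.
  by rewrite -!mnm_nth.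
- move=> i ji iN; have h : (n.-1 - i < n)%N by lia.
  rewrite (_ : (n.-1 - i)%N = Ordinal h) // -!mnm_nth; apply: eq => /=; lia.
Qed.

Lemma addBdelta (α : 'X_{1..n}) : std α -> (α + (delta - α))%MM = delta.
Proof.
move=> sα; apply/mnmP => i; rewrite mnmDE mnmBE subnKC //; exact: std_le.
Qed.

Lemma socle (c r : MP) :
  (forall m : 'X_{1..n}, (0 < mdeg m)%N -> inS (c * 'X_[m])) ->
  inS (c - r) -> supp_in std r ->
  forall α, std α -> α != delta -> r@_α = 0.
Proof.
move=> Hc Hcr Sr.
suff : forall N α, (Mr α < N)%N -> std α -> α != delta -> r@_α = 0.
  by move=> H α; apply: (H (Mr α).+1).
elim => [|N IH] α //= HM sα nα.
set mm := (delta - α)%MM.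
have dm : (0 < mdeg mm)%N.
  rewrite lt0n mdeg_eq0; apply: contra nα => /eqP E.
  by rewrite -(addBdelta sα) -/mm E addm0.
have H1 : inS (r * 'X_[mm]).
  have := inSB (Hc mm dm) (inSMr 'X_[mm] Hcr).
  by rewrite -mulrBl subKr.
have H2 := integ_inS H1.
have E : r * 'X_[mm] = \sum_(α' <- msupp r) r@_α' *: 'X_[(α' + mm)%MM].
  rewrite {1}(mpolyE r) mulr_suml; apply: eq_bigr => α' _.
  by rewrite -scalerAl mpolyXD.
rewrite E integ_sum in H2.
case: (boolP (α \in msupp r)) => [ar|]; last by move/memN_msupp_eq0.
rewrite (bigD1_seq α) //= in H2.
have Z : \sum_(i <- msupp r | i != α) integ (r@_i *: 'X_[(i + mm)]) = 0.
  rewrite big_seq_cond; apply: big1 => α' /andP [a'r nα']; rewrite integZ.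
  case: (boolP (integ 'X_[(α' + mm)%MM] == 0)) => [/eqP -> | nz]; first by rewrite mulr0.
  have sα' : std α' := Sr α' a'r.
  have [s Hs] := integX_ne0 nz.
  have [j [ltj eqj]] := lex_lemma sα sα' nα' (ex_intro _ s Hs).
  have nd : α' != delta.
    apply/eqP => Ed; move: ltj; rewrite Ed; have := std_le sα j; lia.
  have HM' : (Mr α' < N)%N.
    have := Mr_lt sα' ltj eqj; move: HM; lia.
  by rewrite (IH α' HM' sα' nd) mul0r.
rewrite Z addr0 integZ /mm (addBdelta sα) integX_delta mulr1 in H2.
exact: H2.
Qed.

End Socle.

Lemma msupp_malg_sum (I : Type) (s : seq I) (F : I -> Laz) (k : cmonom nat) :
  k \in monalg.msupp (\sum_(i <- s) F i) -> exists i, k \in monalg.msupp (F i).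
Proof.
elim: s => [|x s IH]; first by rewrite big_nil monalg.msupp0 in_fset0.
rewrite big_cons => /(fsubsetP (monalg.msuppD_le _ _)) /fsetUP [h|h].
  by exists x.
exact: IH.
Qed.

Lemma mdeg_delta n : mdeg (delta n) = flag_dim n.
Proof.
rewrite mdegE (reindex_inj rev_ord_inj) /=.
rewrite (eq_bigr (fun i : 'I_n => nat_of_ord i)); last first.
  by move=> i _; rewrite deltaE /=; have := ltn_ord i; lia.
by rewrite -(big_mkord xpredT (fun i => i)) bin2_sum bin2 /flag_dim subn1.
Qed.

Unset Implicit Arguments.

Theorem lemma4p4 (n : nat) (l : int) (c : Omega n) :
  homog_of l c ->
  (forall m : 'X_{1..n}, (0 < mpoly.mdeg m)%N -> inS (c * xmon m)) ->
  exists a : Laz,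
    Lhomog (l - (flag_dim n)%:Z) a /\
    inS (c - a%:MP * pt_class n).
Proof.
move=> Hh Hc.
have [r [Hr Sr]] := reduce_poly (c : mpoly.mpoly n Laz).
have So := socle (fun m h => Hc m h) Hr Sr.
have rE : r = r@_(delta n) *: ('X_[delta n] : mpoly.mpoly n Laz).
  apply/mpolyP => μ; rewrite mcoeffZ mcoeffX.
  case: (eqVneq (delta n) μ) => [<-|ne]; first by rewrite mulr1.
  rewrite mulr0; case: (boolP (μ \in msupp r)) => [/Sr sμ|/memN_msupp_eq0 //].
  by apply: So => //; rewrite eq_sym.
have ic : integ c = r@_(delta n).
  rewrite -(subrK r c) integD (integ_inS Hr) add0r {1}rE integZ integX_delta.
  by rewrite mulr1.
exists (integ c); split; last first.
  have -> : pt_class n = 'X_[delta n] by [].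
  rewrite ic mul_mpolyC -rE; exact: Hr.
move=> k; rewrite /integ /Aop raddf_sum /= => /msupp_malg_sum [σ].
rewrite mcoeffZ mcoeff_sym.
set m := [multinom delta n (σ i) | i < n].
have Hk : forall x : Laz, k \in monalg.msupp ((-1) ^+ σ * x) -> k \in monalg.msupp x.
  by move=> x; case: (odd_perm σ); rewrite ?expr1 ?expr0 ?mulN1r ?mul1r ?monalg.msuppN.
move=> /Hk kx.
have mc : m \in msupp c.
  rewrite mcoeff_msupp; apply/eqP => E; move: kx; rewrite E monalg.msupp0.
  by rewrite in_fset0.
have := Hh m mc k kx; rewrite /m mdeg_mperm mdeg_delta => E.
lia.
Qed.
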